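(* Let $(A,B)$ be a complete bipartite graph with parts $A$ and $B$, $|A|,|B|>2$, whose edges are coloured red and blue so that every vertex of $A$ is incident to at least one blue edge and every vertex of $B$ is incident to at least one red edge. Then $(A,B)$ contains a cycle of length $4$ whose edges are alternately red and blue. *)

(* Defs.v *)
From mathcomp Require Import all_boot.
Set Implicit Arguments. Unset Strict Implicit. Unset Printing Implicit Defensive.

(* The complete bipartite graph (A,B) has vertex parts the finite types A and B
   and an edge ab for every a : A, b : B.  A red/blue edge colouring is a map
   col : A -> B -> colour. *)
Inductive colour := Red | Blue.

(* Every
   4-cycle of K_{A,B} has this shape a1 b1 a2 b2, and an alternating one can be
   labelled so that the edge a1b1 is red. *)
Definition alternating_C4 (A B : finType) (col : A -> B -> colour) : Prop :=
  exists (a1 a2 : A) (b1 b2 : B),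
    a1 <> a2 /\ b1 <> b2 /\
    col a1 b1 = Red /\ col a2 b1 = Blue /\
    col a2 b2 = Red /\ col a1 b2 = Blue.

(* Main.v *)
Require Import Defs.
From mathcomp Require Import all_boot.

Definition isRed (c : colour) : bool := if c is Red then true else false.

Lemma isRedP c : isRed c -> c = Red.
Proof. by case: c. Qed.
Lemma notRedP c : ~~ isRed c -> c = Blue.
Proof. by case: c. Qed.

Theorem proposition2p3 (A B : finType) (col : A -> B -> colour) :
  2 < #|A| -> 2 < #|B| ->
  (forall a : A, exists b : B, col a b = Blue) ->
  (forall b : B, exists a : A, col a b = Red) ->
  alternating_C4 col.
Proof.
move=> hA hB HA HB.
have [a0 _] : {a0 : A | true}.
  by case: (pickP (@predT A)) => [x _|/eq_card0 e]; [exists x | rewrite e in hA].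
pose R (a : A) := [set b | isRed (col a b)].
case: (@arg_maxnP A a0 predT (fun a => #|R a|) isT) => a _ Hmax.
have [b0 Hb0] := HA a.
have [a' Ha'] := HB b0.
have Hle : #|R a'| <= #|R a| by apply: Hmax.
have : ~~ (R a \subset R a').
  apply/negP => Hsub.
  have /eqP E : R a == R a' by rewrite eqEcard Hsub Hle.
  have : b0 \in R a' by rewrite inE Ha'.
  by rewrite -E inE Hb0.
case/subsetPn => b2; rewrite !inE => H1 H2.
exists a', a, b0, b2.
split; first by move=> e; subst; rewrite Ha' in Hb0.
split; first by move=> e; subst; rewrite Hb0 in H1.
split; first by [].
split; first by [].
split; first exact: isRedP.
exact: notRedP.
Qed.
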